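(* Consider the algorithm MoBIL-VI described in the context with weights $w_n=n^p$ and $p>1$. Then $$\mathcal R(p)\le C_p\Big(\frac{pG_h^2}{2(p-1)\mu_h}\frac1{N^2}+\frac{\epsilon^w_{\hat{\mathcal F}}}{pN}\Big),\qquad C_p=\frac{(p+1)^2e^{p/N}}{2\mu_f}.$$
   Context: Setting: $\Pi$ is a compact convex subset of a normed space (norm $\|\cdot\|$, dual norm $\|\cdot\|_*$) of policies; $d_\pi$ is a distribution over state–time pairs induced by $\pi$; $\pi^*$ is an expert policy and $D(\pi^*_s\|\pi_s)\ge0$ a discrepancy; $F(\pi',\pi)=\mathbb E_{(s,t)\sim d_{\pi'}}[D(\pi^*_s\|\pi_s)]$ and $\nabla_2F$ is its gradient in the second argument. $\hat{\mathcal F}$ is a convex set (in a normed space) of ''predictive models'' $\hat F$, each a bivariate function on $\Pi\times\Pi$ with gradient $\nabla_2\hat F$ in the second argument; assume there is $L\ge0$ with $\|\nabla_2\hat F(\pi,\pi)-\nabla_2\hat F(\pi',\pi')\|_*\le L\|\pi-\pi'\|$ for all $\hat F\in\hat{\mathcal F}$, $\pi,\pi'\in\Pi$. Online learning: in round $n$ the learner plays $\pi_n$, the policy cost is $f_n(\pi)=F(\pi_n,\pi)$, and the model cost $h_n:\hat{\mathcal F}\to\mathbb R$ satisfies $h_n(\hat F)\ge\|\nabla_2F(\pi_n,\pi_n)-\nabla_2\hat F(\pi_n,\pi_n)\|_*^2$. Assume each $f_n$ is $\mu_f$-strongly convex with $\|\nabla f_n(\pi)\|_*\le G_f$ on $\Pi$,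 and each $h_n$ is $\mu_h$-strongly convex with $\|\nabla h_n(\hat F)\|_*\le G_h$ on $\hat{\mathcal F}$ ($\mu_f,\mu_h>0$). MoBIL-VI (deterministic): with weights $w_n=n^p$, in round $n$ update the model by $\hat F_{n+1}\in\operatorname{arg\,min}_{\hat F\in\hat{\mathcal F}}\sum_{m=1}^n\frac{w_m}{m}h_m(\hat F)$, and then set $\pi_{n+1}\in\Pi$ to be an (exact) solution of the variational inequality $\langle\Phi_n(\pi_{n+1}),\pi'-\pi_{n+1}\rangle\ge0$ for all $\pi'\in\Pi$, where $\Phi_n(\pi)=\sum_{m=1}^n w_m\nabla f_m(\pi)+w_{n+1}\nabla_2\hat F_{n+1}(\pi,\pi)$. Define $\mathrm{regret}^w(\Pi)=\max_{\pi\in\Pi}\sum_{n=1}^N w_n(f_n(\pi_n)-f_n(\pi))$ and $\mathcal R(p)=\mathrm{regret}^w(\Pi)/w_{1:N}$, $w_{1:N}=\sum_{n=1}^N w_n$. The constant $\epsilon^w_{\hat{\mathcal F}}$ satisfies: for all $N$ and weights $\theta_n>0$ with $\sum_{n=1}^N\theta_n=1$, $\max_{\{\pi_n\in\Pi\}}\min_{\hat F\in\hat{\mathcal F}}\sum_{n=1}^N\theta_n h_n(\hat F)\le\epsilon^w_{\hat{\mathcal F}}$.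
   Formalization: The initial policy π₁ is not arbitrary: it solves the variational inequality $\langle\Phi_0(\pi_1),\pi'-\pi_1\rangle\ge0$ for all π′ ∈ Π, with $\Phi_0(\pi)=w_1\nabla_2\hat F_1(\pi,\pi)$ for some initial model $\hat F_1\in\hat{\mathcal F}$. The statement above fails without it. *)

(* Defs.v *)
From HB Require Import structures.
From mathcomp Require Import all_boot all_order all_algebra.
From mathcomp Require Import all_classical all_reals all_analysis.
Set Implicit Arguments. Unset Strict Implicit. Unset Printing Implicit Defensive.
Import Order.TTheory GRing.Theory Num.Theory.
Import numFieldNormedType.Exports.
Local Open Scope classical_set_scope.
Local Open Scope ring_scope.

Section Defs.
Variable R : realType.

Definition dual_norm (V : normedModType R) (g : V -> R) : R :=
  sup [set g x | x in [set x : V | `|x| <= 1]].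

Definition strongly_convex_on (V : normedModType R) (A : set V) (mu : R)
    (f : V -> R) : Prop :=
  forall x y t, A x -> A y -> 0 <= t <= 1 ->
    f (t *: x + (1 - t) *: y) <=
      t * f x + (1 - t) * f y - mu / 2 * t * (1 - t) * `|x - y| ^+ 2.

Definition wpow (p : R) (n : nat) : R := powR (n%:R) p.

Definition wsum (p : R) (N : nat) : R := \sum_(1 <= n < N.+1) wpow p n.

Definition PhiVI (X M : normedModType R) (p : R) (F : X -> X -> R)
    (Fhat : M -> X -> X -> R) (pi : nat -> X) (Fh : nat -> M) (n : nat)
    (x v : X) : R :=
  \sum_(1 <= m < n.+1) wpow p m * ('d (F (pi m)) x) v
  + wpow p n.+1 * ('d (Fhat (Fh n.+1) x) x) v.

(* weighted regret against a fixed comparator x :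
   sum_{n=1}^N w_n (f_n(pi_n) - f_n(x)), with f_n = F(pi_n, .) *)
Definition wregret_at (X : normedModType R) (p : R) (F : X -> X -> R)
    (pi : nat -> X) (N : nat) (x : X) : R :=
  \sum_(1 <= n < N.+1) wpow p n * (F (pi n) (pi n) - F (pi n) x).

End Defs.

(* Main.v *)
Require Import Defs.
From HB Require Import structures.
From mathcomp Require Import all_boot all_order all_algebra.
From mathcomp Require Import all_classical all_reals all_analysis.
From mathcomp Require Import ring lra.
Import Order.TTheory GRing.Theory Num.Theory.
Import numFieldNormedType.Exports.
Local Open Scope classical_set_scope.
Local Open Scope ring_scope.

Section Aux.
Variable R : realType.

Lemma sc_grad (V : normedModType R) (A : set V) (mu : R) (f : V -> R) x y :
  0 <= mu -> strongly_convex_on A mu f -> A x -> A y -> differentiable f x ->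
  'd f x (y - x) <= f y - f x - mu / 2 * `|y - x| ^+ 2.
Proof.
move=> mu0 sc Ax Ay df.
set v := y - x.
have dv : derivable f x v by apply: diff_derivable.
rewrite -deriveE //.
rewrite /derive (cvg_at_rightE (fun h : R => h^-1 *: ((f \o shift x) (h *: v) - f x))) //.
set K := f y - f x - mu / 2 * `|v| ^+ 2.
apply/ler_addgt0Pr => e e0.
apply: limr_le.
  apply/cvg_ex; exists ('D_v f x).
  apply: cvg_trans dv; apply: cvg_app.
  move=> B [r r0 Br]; exists r => // z zr zgt0; apply: Br => //.
  exact/lt0r_neq0.
have c0 : 0 < mu / 2 * `|v| ^+ 2 + 1 by rewrite ltr_wpDl ?ler01 // mulr_ge0 // ?divr_ge0 // exprn_ge0.
near=> h.
have h0 : 0 < h by near: h; exact: nbhs_right_gt.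
have h1 : h <= 1 by near: h; apply: nbhs_right_le; exact: ltr01.
have he : h <= e / (mu / 2 * `|v| ^+ 2 + 1).
  by near: h; apply: nbhs_right_le; rewrite divr_gt0.
have hh : (0 <= h <= 1) by rewrite (ltW h0) h1.
have := sc y x h Ay Ax hh.
have -> : h *: y + (1 - h) *: x = h *: v + x.
  by rewrite /v scalerBr scalerBl scale1r addrA addrAC.
move=> H.
rewrite /= -/v in H *.
have cge : 0 <= mu / 2 * `|v| ^+ 2 by rewrite mulr_ge0 // ?divr_ge0 // exprn_ge0.
have ch : mu / 2 * `|v| ^+ 2 * h <= e.
  rewrite ler_pdivlMr // in he.
  nra.
change (h^-1 * (f (h *: v + x) - f x) <= K + e).
rewrite mulrC ler_pdivrMr //.
rewrite /K.
move: H cge ch h0; set c := mu / 2 * `|v| ^+ 2; set a := f (h *: v + x).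
have -> : mu / 2 * h * (1 - h) * `|v| ^+ 2 = c * (h * (1 - h)) by rewrite /c; ring.
move=> H cge ch h0.
have : c * h * h <= e * h by rewrite ler_pM2r.
nra.
Unshelve. all: by end_near.
Qed.

Lemma d_bound (V : normedModType R) (f : V -> R) x :
  differentiable f x -> exists r : R, forall v, `|'d f x v| <= r * `|v|.
Proof.
move=> df.
have c := diff_continuous df.
have /linear_boundedP := (proj2 (linear_bounded_continuous ('d f x))) c.
move=> /pinfty_ex_gt0 [r r0 H]; by exists r.
Qed.

Lemma dn_bound (V : normedModType R) (g : V -> R) (r : R) :
  (forall x, `|g x| <= r * `|x|) -> (forall (k : R) x, g (k *: x) = k * g x) ->
  forall v, g v <= dual_norm g * `|v|.
Proof.
move=> gb gZ v.
have g0 : g 0 = 0 by rewrite -(scale0r (0 : V)) gZ mul0r.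
have [->|vn0] := eqVneq v 0; first by rewrite g0 normr0 mulr0.
set S := [set g x | x in [set x : V | `|x| <= 1]].
have hs : has_sup S.
  split; first by exists (g 0), 0 => //=; rewrite normr0.
  exists `|r| => _ [x /= x1 <-].
  apply: (le_trans (ler_norm _)); apply: (le_trans (gb x)).
  apply: (le_trans (ler_norm _)); rewrite normrM.
  by rewrite normr_id ler_piMr.
set u := `|v|^-1 *: v.
have Su : S (g u) by exists u => //=; rewrite /u normfZV.
have := sup_upper_bound hs Su.
rewrite /u gZ => H.
have nv : 0 < `|v| by rewrite normr_gt0.
rewrite /dual_norm -/S.
rewrite mulrC -ler_pdivrMl //.
Qed.
End Aux.

Section Num.
Variable R : realType.
Implicit Types a b r : R.

Lemma powE a r : 0 < a -> a `^ r = expR (r * ln a).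
Proof. by move=> a0; rewrite /powR gt_eqF. Qed.

Lemma powB1 a r : 0 < a -> a `^ (r - 1) = a `^ r / a.
Proof.
move=> a0; rewrite !powE // mulrBl mul1r expRB lnK //.
Qed.

Lemma L2 {r a b} : 0 <= r -> r <= 1 -> 0 < a -> 0 < b ->
  b `^ r <= a `^ r + r * a `^ (r - 1) * (b - a).
Proof.
move=> r0 r1 a0 b0.
have ba0 : 0 < b / a by rewrite divr_gt0.
have := @concave_ln R (Itv01 r0 r1) (b / a) 1 ba0 ltr01.
rewrite !convRE /= ln1 mulr0 addr0 => H.
have pos : 0 < r * (b / a) + (1 - r).
  have [->|rn0] := eqVneq r 0; first by rewrite mul0r add0r subr0 ltr01.
  have rp : 0 < r by rewrite lt_def rn0 r0.
  by rewrite ltr_wpDr ?subr_ge0 // mulr_gt0.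
rewrite -ler_expR lnK ?posrE // in H.
rewrite ln_div ?posrE // mulrBr expRB -!powE // in H.
rewrite powB1 //.
rewrite ler_pdivrMr ?powR_gt0 // in H.
have -> : a `^ r + r * (a `^ r / a) * (b - a) = (r * (b / a) + (1 - r) * 1) * a `^ r.
  by field; rewrite gt_eqF.
exact: H.
by rewrite mulr1.
Qed.

Lemma L1 r a b : 1 <= r -> 0 < a -> 0 < b ->
  a `^ r + r * a `^ (r - 1) * (b - a) <= b `^ r.
Proof.
move=> r1 a0 b0.
set T := a `^ r + r * a `^ (r - 1) * (b - a).
have [Tle|Tgt] := leP T 0; first by apply: (le_trans Tle); exact: powR_ge0.
have rp : 0 < r by apply: lt_le_trans r1.
have s0 : 0 <= r^-1 by rewrite invr_ge0 ltW.
have s1 : r^-1 <= 1 by rewrite invf_le1.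
have Ap : 0 < a `^ r by rewrite powR_gt0.
have := L2 s0 s1 Ap Tgt.
have -> : (a `^ r) `^ r^-1 = a by rewrite -powRrM mulfV ?gt_eqF // powRr1 // ltW.
have -> : r^-1 * (a `^ r) `^ (r^-1 - 1) * (T - a `^ r) = b - a.
  rewrite /T addrAC subrr add0r.
  rewrite -powRrM !powE //.
  have E : expR (r * (r^-1 - 1) * ln a) * expR ((r - 1) * ln a) = 1.
    rewrite -expRD.
    have -> : r * (r^-1 - 1) * ln a + (r - 1) * ln a = 0.
      by field; rewrite gt_eqF.
    exact: expR0.
  transitivity (r^-1 * r * (expR (r * (r^-1 - 1) * ln a) * expR ((r - 1) * ln a)) * (b - a)).
    ring.
  by rewrite E mulr1 mulVf ?gt_eqF // mul1r.
rewrite addrC subrK.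
move=> H.
have -> : T = (T `^ r^-1) `^ r by rewrite -powRrM mulVf ?gt_eqF // powRr1 // ltW.
by apply: (ge0_ler_powR (ltW rp)); rewrite ?nnegrE ?powR_ge0 ?(ltW b0).
Qed.


Lemma pow0q q : 0 < q -> (0 : R) `^ q = 0.
Proof. by move=> q0; rewrite powR0 // gt_eqF. Qed.

Lemma sumA q n : 1 <= q ->
  (n%:R : R) `^ q <= q * \sum_(1 <= k < n.+1) (k%:R : R) `^ (q - 1).
Proof.
move=> q1; have q0 : 0 < q by apply: lt_le_trans q1.
elim: n => [|n IH]; first by rewrite big_geq // mulr0 pow0q.
rewrite big_nat_recr //= mulrDr.
case: n IH => [|n] IH.
  by rewrite big_geq // mulr0 add0r powR1 mulr1.
have := @L1 q (n.+2%:R) (n.+1%:R) q1 (ltr0Sn _ _) (ltr0Sn _ _).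
have -> : (n.+1%:R - n.+2%:R : R) = -1 by rewrite -natr1 -[n.+2]addn1 natrD; ring.
lra.
Qed.

Lemma sumD q n : 0 < q ->
  q * \sum_(1 <= k < n.+1) (k%:R : R) `^ (q - 1) <= (n.+1%:R) `^ q.
Proof.
move=> q0.
have [q1|q1] := leP 1 q.
  elim: n => [|n IH]; first by rewrite big_geq // mulr0 powR_ge0.
  rewrite big_nat_recr //= mulrDr.
  have := @L1 q (n.+1%:R) (n.+2%:R) q1 (ltr0Sn _ _) (ltr0Sn _ _).
  have -> : (n.+2%:R - n.+1%:R : R) = 1 by rewrite -[n.+2]addn1 natrD; ring.
  lra.
suff H : q * \sum_(1 <= k < n.+1) (k%:R : R) `^ (q - 1) <= (n%:R) `^ q.
  apply: (le_trans H); apply: (ge0_ler_powR (ltW q0)); rewrite ?nnegrE //.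
  by rewrite ler_nat.
elim: n => [|n IH]; first by rewrite big_geq // mulr0 powR_ge0.
rewrite big_nat_recr //= mulrDr.
case: n IH => [|n] IH.
  by rewrite big_geq // mulr0 add0r powR1 mulr1 ltW.
have := @L2 q (n.+2%:R) (n.+1%:R) (ltW q0) (ltW q1) (ltr0Sn _ _) (ltr0Sn _ _).
have -> : (n.+1%:R - n.+2%:R : R) = -1 by rewrite -[n.+2]addn1 natrD; ring.
lra.
Qed.

Lemma powS_exp q (N : nat) : 0 <= q -> (0 < N)%N ->
  (N.+1%:R : R) `^ q <= (N%:R) `^ q * expR (q / N%:R).
Proof.
move=> q0 N0.
have Np : (0 : R) < N%:R by rewrite ltr0n.
rewrite !powE // ?ltr0Sn // -expRD ler_expR.
have -> : (N.+1%:R : R) = N%:R * (1 + N%:R^-1).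
  by rewrite mulrDr mulr1 mulfV ?gt_eqF // -natr1.
have p1 : (0:R) < 1 + N%:R^-1 by rewrite ltr_wpDr ?invr_ge0 ?ltW.
rewrite lnM ?posrE //.
rewrite mulrDr lerD2l ler_wpM2l //.
by apply: le_ln1Dx; apply: (lt_le_trans (ltrN10 _)); rewrite invr_ge0 ltW.
Qed.

End Num.

Section Gen.
Variable R : realType.

Lemma tele (T : Type) (a : nat -> T -> R) (A : set T) (z : nat -> T) (c : nat -> R) N x :
  (forall n, (1 <= n)%N -> A (z n)) -> A x ->
  (forall n y, (1 <= n)%N -> A y ->
     \sum_(1 <= m < n.+1) a m (z n) - \sum_(1 <= m < n.+1) a m y <= c n) ->
  \sum_(1 <= n < N.+1) (a n (z n) - a n x) <= \sum_(1 <= n < N.+1) c n.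
Proof.
move=> Az; elim: N x => [|N IH] x Ax Hc; first by rewrite !big_geq.
have IH' := IH (z N.+1) (Az N.+1 isT) Hc.
have := Hc N.+1 x isT Ax.
rewrite !(big_nat_recr N.+1) //= !sumrB.
rewrite !sumrB in IH'.
move: IH'; set s1 := \sum_(1 <= i < N.+1) a i (z i).
set s2 := \sum_(1 <= i < N.+1) a i (z N.+1).
set s3 := \sum_(1 <= i < N.+1) a i x.
lra.
Qed.

Lemma sc_sum (V : normedModType R) (A : set V) (mu : R) (g : nat -> V -> R)
    (c : nat -> R) n :
  (forall k, (1 <= k)%N -> strongly_convex_on A mu (g k)) -> (forall k, 0 <= c k) ->
  strongly_convex_on A (mu * \sum_(1 <= k < n.+1) c k)
    (fun y => \sum_(1 <= k < n.+1) c k * g k y).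
Proof.
move=> sc c0 x y t Ax Ay t01 /=.
set d := `|x - y| ^+ 2.
have -> : t * (\sum_(1 <= k < n.+1) c k * g k x) +
   (1 - t) * (\sum_(1 <= k < n.+1) c k * g k y) -
   mu * (\sum_(1 <= k < n.+1) c k) / 2 * t * (1 - t) * d =
   \sum_(1 <= k < n.+1) c k * (t * g k x + (1 - t) * g k y - mu / 2 * t * (1 - t) * d).
  rewrite [RHS](eq_bigr (fun k => t * (c k * g k x) + (1 - t) * (c k * g k y)
     - (mu / 2 * t * (1 - t) * d) * c k)); last by move=> k _; ring.
  rewrite sumrB big_split /= -!mulr_sumr. ring.
apply: ler_sum_nat => k /andP [k1 _].
by apply: ler_wpM2l => //; apply: sc.
Qed.

Lemma conv_mem {V : normedModType R} {A : set V} {x y t} :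
  convex_set A -> A x -> A y -> 0 <= t -> t <= 1 -> A (t *: x + (1 - t) *: y).
Proof.
move=> cA Ax Ay t0 t1.
have := cA x y (Itv01 t0 t1); rewrite !inE; apply => //.
Qed.

Lemma min_sc (V : normedModType R) (A : set V) (sig : R) (H : V -> R) z y :
  convex_set A -> 0 <= sig -> strongly_convex_on A sig H -> A z -> A y ->
  (forall w, A w -> H z <= H w) -> sig / 2 * `|y - z| ^+ 2 <= H y - H z.
Proof.
move=> cA s0 sc Az Ay Hmin.
set c := sig / 2 * `|y - z| ^+ 2.
have c0 : 0 <= c by rewrite mulr_ge0 ?divr_ge0 ?exprn_ge0.
have key : forall t, 0 < t -> t <= 1 -> c * (1 - t) <= H y - H z.
  move=> t t0 t1.
  have hm := Hmin _ (conv_mem cA Ay Az (ltW t0) t1).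
  have := sc y z t Ay Az; rewrite (ltW t0) t1 => /(_ isT) hs.
  have : t * (c * (1 - t)) <= t * (H y - H z).
    move: hm hs; rewrite /c; set q := `|y - z| ^+ 2.
    have -> : sig / 2 * t * (1 - t) * q = t * (sig / 2 * q * (1 - t)) by ring.
    lra.
  by rewrite ler_pM2l.
clearbody c.
have X0 := key 1 ltr01 (lexx _).
rewrite subrr mulr0 in X0.
have [//|lt] := leP c (H y - H z).
have cp : 0 < c by apply: le_lt_trans lt.
have := key ((c - (H y - H z)) / (2 * c)).
have t0 : 0 < (c - (H y - H z)) / (2 * c) by apply: divr_gt0; [rewrite subr_gt0 | rewrite mulr_gt0].
have t1 : (c - (H y - H z)) / (2 * c) <= 1.
  rewrite ler_pdivrMr ?mulr_gt0 //; lra.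
move=> /(_ t0 t1).
have -> : c * (1 - (c - (H y - H z)) / (2 * c)) = (c + (H y - H z)) / 2.
  by field; rewrite gt_eqF.
lra.
Qed.

Lemma quad (a s t : R) : 0 < s -> - (a ^+ 2 / (2 * s)) <= - a * t + s / 2 * t ^+ 2.
Proof.
move=> s0.
have : 0 <= (s * t - a) ^+ 2 / (2 * s).
  by apply: divr_ge0; [exact: sqr_ge0 | lra].
have -> : (s * t - a) ^+ 2 / (2 * s) = a ^+ 2 / (2 * s) + (- a * t + s / 2 * t ^+ 2).
  by field; rewrite gt_eqF.
lra.
Qed.

End Gen.

Section DN.
Variable R : realType.
Lemma dn_lin1 (V : normedModType R) (f : V -> R) x : differentiable f x ->
  forall u, - (dual_norm ('d f x) * `|u|) <= 'd f x u.
Proof.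
move=> df u; have [r rb] := @d_bound R _ _ _ df.
have := @dn_bound R V ('d f x) r rb (fun k y => linearZ _ _) (- u).
rewrite linearN normrN; lra.
Qed.

Lemma dn_lin2 (V : normedModType R) (f1 f2 : V -> R) x1 x2 :
  differentiable f1 x1 -> differentiable f2 x2 ->
  forall u, - (dual_norm (fun v => 'd f1 x1 v - 'd f2 x2 v) * `|u|)
            <= 'd f1 x1 u - 'd f2 x2 u.
Proof.
move=> df1 df2 u; have [r1 rb1] := @d_bound R _ _ _ df1; have [r2 rb2] := @d_bound R _ _ _ df2.
have rb : forall y : V, `|'d f1 x1 y - 'd f2 x2 y| <= (r1 + r2) * `|y|.
  move=> y; rewrite mulrDl; apply: (le_trans (ler_normB _ _)); exact: lerD.
have gZ : forall (k : R) (y : V), 'd f1 x1 (k *: y) - 'd f2 x2 (k *: y) = k * ('d f1 x1 y - 'd f2 x2 y).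
  by move=> k y; rewrite !linearZ /= -scalerDr.
have := @dn_bound R V (fun v => 'd f1 x1 v - 'd f2 x2 v) _ rb gZ (- u).
rewrite /= !raddfN normrN opprK; lra.
Qed.
End DN.

Theorem theorem2 (R : realType) (X M : normedModType R)
  (Pi : set X) (Fset : set M)
  (F : X -> X -> R) (Fhat : M -> X -> X -> R) (h : X -> M -> R)
  (L mu_f G_f mu_h G_h eps p : R) (pi : nat -> X) (Fh : nat -> M) (N : nat) :
  (* the policy class and the model class *)
  compact Pi -> convex_set Pi -> convex_set Fset ->
  (* F and the models are differentiable in their second argument on Pi *)
  (forall x y, Pi x -> Pi y -> differentiable (F x) y) ->
  (forall m x y, Fset m -> Pi x -> Pi y -> differentiable (Fhat m x) y) ->
  (* Lipschitz continuity of pi |-> grad_2 Fhat(pi, pi) *)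
  0 <= L ->
  (forall m x y, Fset m -> Pi x -> Pi y ->
     dual_norm (fun v => ('d (Fhat m x) x) v - ('d (Fhat m y) y) v)
       <= L * `|x - y|) ->
  (* assumptions on the per-round costs f_n = F(pi_n, .) and h_n = h(pi_n) *)
  0 < mu_f -> 0 < mu_h ->
  (forall n, (1 <= n)%N -> strongly_convex_on Pi mu_f (F (pi n))) ->
  (forall n x, (1 <= n)%N -> Pi x -> dual_norm ('d (F (pi n)) x) <= G_f) ->
  (forall n, (1 <= n)%N -> strongly_convex_on Fset mu_h (h (pi n))) ->
  (forall n, (1 <= n)%N -> forall m, Fset m -> differentiable (h (pi n)) m) ->
  (forall n m, (1 <= n)%N -> Fset m -> dual_norm ('d (h (pi n)) m) <= G_h) ->
  (forall n m, (1 <= n)%N -> Fset m ->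
     dual_norm (fun v => ('d (F (pi n)) (pi n)) v
                         - ('d (Fhat m (pi n)) (pi n)) v) ^+ 2
       <= h (pi n) m) ->
  (* the constant eps^w_{Fhat} (min over the model class read as an infimum) *)
  (forall (K : nat) (theta : nat -> R) (ps : nat -> X),
     (forall n, (1 <= n <= K)%N -> 0 < theta n) ->
     \sum_(1 <= n < K.+1) theta n = 1 ->
     (forall n, (1 <= n <= K)%N -> Pi (ps n)) ->
     forall e, 0 < e -> exists m, Fset m /\
       \sum_(1 <= n < K.+1) theta n * h (ps n) m <= eps + e) ->
  (* MoBIL-VI: the initial model, model updates and VI policy updates *)
  Fset (Fh 1%N) ->
  (forall n, (1 <= n)%N -> Fset (Fh n.+1) /\
     forall m, Fset m ->
       \sum_(1 <= k < n.+1) wpow p k / k%:R * h (pi k) (Fh n.+1)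
       <= \sum_(1 <= k < n.+1) wpow p k / k%:R * h (pi k) m) ->
  (forall n, Pi (pi n.+1) /\
     forall x, Pi x ->
       0 <= PhiVI p F Fhat pi Fh n (pi n.+1) (x - pi n.+1)) ->
  (* conclusion *)
  1 < p -> (1 <= N)%N ->
  forall x, Pi x ->
    wregret_at p F pi N x / wsum p N <=
      (p + 1) ^+ 2 * expR (p / N%:R) / (2 * mu_f) *
      (p * G_h ^+ 2 / (2 * (p - 1) * mu_h) * (1 / (N%:R ^+ 2))
       + eps / (p * N%:R)).
Proof.
move=> cPi cvxPi cvxF dF dFhat L0 HL muf0 muh0 scf Gf sch dh Gh hdn heps Fh1 Hupd HVI p1 N1 x Px.
have p0 : 0 < p by apply: lt_trans p1.
set w := wpow p.
set v := fun k : nat => w k / k%:R.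
set V := fun n : nat => \sum_(1 <= k < n.+1) v k.
have wpos : forall n, (1 <= n)%N -> 0 < w n.
  by move=> n n1; rewrite /w /wpow powR_gt0 // ltr0n.
have vpos : forall n, (1 <= n)%N -> 0 < v n.
  by move=> n n1; rewrite /v divr_gt0 ?wpos ?ltr0n.
have vge0 : forall n, 0 <= v n.
  by move=> n; rewrite /v divr_ge0 // /w /wpow powR_ge0.
have Ppi : forall n, (1 <= n)%N -> Pi (pi n).
  by case=> // n _; case: (HVI n).
have FFh : forall n, (1 <= n)%N -> Fset (Fh n).
  by case=> // [[|n]] _ //; case: (Hupd n.+1 isT).
have hnn : forall n, (1 <= n)%N -> 0 <= h (pi n) (Fh n).
  by move=> n n1; apply: le_trans (hdn n (Fh n) n1 (FFh n n1)); exact: sqr_ge0.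
have Wpos : forall n, (1 <= n)%N -> 0 < wsum p n.
  move=> n n1; rewrite /wsum big_nat_recr //=.
  by apply: ltr_wpDl; [apply: sumr_ge0 => k _; rewrite /w /wpow powR_ge0 | exact: wpos].
have PS1 : forall n y, (1 <= n)%N -> Pi y ->
  \sum_(1 <= m < n.+1) w m * F (pi m) (pi n) - \sum_(1 <= m < n.+1) w m * F (pi m) y
  <= w n ^+ 2 * h (pi n) (Fh n) / (2 * (mu_f * wsum p n)).
  move=> n y n1 Py.
  have Pz := Ppi n n1.
  have lb : \sum_(1 <= m < n.+1) w m * ('d (F (pi m)) (pi n) (y - pi n))
      + mu_f / 2 * `|y - pi n| ^+ 2 * wsum p n
      <= \sum_(1 <= m < n.+1) w m * F (pi m) y - \sum_(1 <= m < n.+1) w m * F (pi m) (pi n).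
    rewrite -sumrB /wsum mulr_sumr -big_split /=.
    apply: ler_sum_nat => m /andP [m1 _].
    have := @sc_grad R _ _ _ _ (pi n) y (ltW muf0) (scf m m1) Pz Py (dF _ _ (Ppi m m1) Pz).
    have := wpos m m1.
    rewrite -/w => wp H1; have := ler_wpM2l (ltW wp) H1; nra.
  have vi : 0 <= \sum_(1 <= m < n) w m * 'd (F (pi m)) (pi n) (y - pi n)
                 + w n * 'd (Fhat (Fh n) (pi n)) (pi n) (y - pi n).
    clear lb; move: n1 Pz; case: n => // n' _ _.
    by case: (HVI n') => _ /(_ y Py).
  rewrite big_nat_recr //= in lb.
  have gb := @dn_lin2 R _ _ _ _ _ (dF (pi n) (pi n) Pz Pz) (dFhat (Fh n) (pi n) (pi n) (FFh n n1) Pz Pz) (y - pi n).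
  have hd := hdn n (Fh n) n1 (FFh n n1).
  set D := dual_norm _ in gb hd.
  set sig := mu_f * wsum p n.
  have sp : 0 < sig by rewrite mulr_gt0 ?Wpos.
  have q := @quad R (w n * D) sig `|y - pi n| sp.
  have g1 := ler_wpM2l (ltW (wpos n n1)) gb.
  have g2 : (w n * D) ^+ 2 / (2 * sig) <= w n ^+ 2 * h (pi n) (Fh n) / (2 * sig).
    have s2 : 0 < (2 * sig)^-1 by rewrite invr_gt0 mulr_gt0.
    rewrite ler_pM2r //.
    have -> : (w n * D) ^+ 2 = w n ^+ 2 * D ^+ 2 by ring.
    by rewrite ler_wpM2l // sqr_ge0.
  move: lb vi g1 g2 q; rewrite /sig.
  set a1 := \sum_(1 <= i < n) _.
  set a2 := 'd (F (pi n)) (pi n) (y - pi n).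
  set a3 := 'd (Fhat (Fh n) (pi n)) (pi n) (y - pi n).
  move=> lb vi g1 g2 q.
  nra.
have R1 : wregret_at p F pi N x <=
    \sum_(1 <= n < N.+1) w n ^+ 2 * h (pi n) (Fh n) / (2 * (mu_f * wsum p n)).
  rewrite /wregret_at (eq_bigr (fun n => w n * F (pi n) (pi n) - w n * F (pi n) x)); last first.
    by move=> n _; rewrite mulrBr.
  exact: (@tele R X (fun m y => w m * F (pi m) y) Pi pi _ N x Ppi Px PS1).
have PS2 : forall n y, (1 <= n)%N -> Fset y ->
  \sum_(1 <= k < n.+1) v k * h (pi k) (Fh n) - \sum_(1 <= k < n.+1) v k * h (pi k) y
  <= v n ^+ 2 * G_h ^+ 2 / (2 * (mu_h * V n)).
  case=> // n' y _ Fy.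
  have Fz := FFh n'.+1 isT.
  have part1 : mu_h * V n' / 2 * `|y - Fh n'.+1| ^+ 2 <=
      \sum_(1 <= k < n'.+1) v k * h (pi k) y - \sum_(1 <= k < n'.+1) v k * h (pi k) (Fh n'.+1).
    case: n' Fz => [|n'] Fz; first by rewrite /V !big_geq // mulr0 mul0r mul0r subrr.
    apply: (@min_sc R M Fset (mu_h * V n'.+1) (fun y => \sum_(1 <= k < n'.+2) v k * h (pi k) y)) => //.
    - by apply: mulr_ge0; [exact: ltW | apply: sumr_ge0 => k _].
    - rewrite /V /=; exact: (@sc_sum R M Fset mu_h (fun k => h (pi k)) v n'.+1 sch vge0).
    - by case: (Hupd n'.+1 isT) => _ H w0 Fw; exact: H.
  have part2 := @sc_grad R _ _ _ _ (Fh n'.+1) y (ltW muh0) (sch n'.+1 isT) Fz Fy (dh n'.+1 isT _ Fz).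
  have gb := @dn_lin1 R _ _ _ (dh n'.+1 isT _ Fz) (y - Fh n'.+1).
  have gG := Gh n'.+1 (Fh n'.+1) isT Fz.
  set Dn := dual_norm _ in gb gG.
  set t := `|y - Fh n'.+1| in part1 part2 gb.
  have t0 : 0 <= t by rewrite /t normr_ge0.
  have Vp : 0 < mu_h * V n'.+1.
    apply: mulr_gt0 => //; rewrite /V big_nat_recr //=.
    by apply: ltr_wpDl; [apply: sumr_ge0 => k _ | exact: vpos].
  have q := @quad R (v n'.+1 * G_h) (mu_h * V n'.+1) t Vp.
  have VS : V n'.+1 = V n' + v n'.+1 by rewrite /V big_nat_recr.
  rewrite VS in q.
  rewrite !(big_nat_recr n'.+1) //=.
  have e1 : - (G_h * t) <= - (Dn * t) by rewrite lerN2 ler_wpM2r.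
  have vp := vpos n'.+1 isT.
  move: part1 part2 gb e1 q.
  set a := 'd (h (pi n'.+1)) (Fh n'.+1) (y - Fh n'.+1).
  set S1 := \sum_(1 <= k < n'.+1) v k * h (pi k) y.
  set S2 := \sum_(1 <= k < n'.+1) v k * h (pi k) (Fh n'.+1).
  move=> part1 part2 gb e1 q.
  have := ler_wpM2l (ltW vp) part2.
  have := ler_wpM2l (ltW vp) gb.
  have := ler_wpM2l (ltW vp) e1.
  rewrite VS; lra.
have pm1 : 0 < p - 1 by rewrite subr_gt0.
have vE : forall k, v k = (k%:R : R) `^ (p - 1).
  case=> [|k].
    by rewrite /v invr0 mulr0 pow0q.
  by rewrite /v /w /wpow powB1 ?ltr0Sn.
have wE : forall k, w k = (k%:R : R) `^ (p + 1 - 1).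
  by move=> k; rewrite addrK.
have VE : forall n, V n = \sum_(1 <= k < n.+1) (k%:R : R) `^ (p - 1).
  by move=> n; apply: eq_bigr => k _; rewrite vE.
have WE : forall n, wsum p n = \sum_(1 <= k < n.+1) (k%:R : R) `^ (p + 1 - 1).
  by move=> n; apply: eq_bigr => k _; rewrite -wE.
have key1 : forall n, (1 <= n)%N -> w n ^+ 2 <= (p + 1) * v n * wsum p n.
  move=> n n1.
  have np : (0 : R) < n%:R by rewrite ltr0n.
  have := @sumA R (p + 1) n (ler_wpDl (ltW p0) (lexx 1)).
  rewrite -WE.
  have -> : (n%:R : R) `^ (p + 1) = w n * n%:R.
    by rewrite /w /wpow -[in RHS](addrK 1 p) powB1 // mulfVK // gt_eqF.
  move=> H.
  have -> : w n ^+ 2 = (w n / n%:R) * (w n * n%:R) by field; rewrite gt_eqF.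
  rewrite -/(v n) -mulrA mulrCA.
  have := ler_wpM2l (vge0 n) H; lra.
have key2 : forall n, (1 <= n)%N -> v n ^+ 2 <= p * (v n / n%:R) * V n.
  move=> n n1.
  have np : (0 : R) < n%:R by rewrite ltr0n.
  have := @sumA R p n (ltW p1).
  rewrite -VE.
  have -> : (n%:R : R) `^ p = v n * n%:R.
    by rewrite /v /w /wpow mulfVK // gt_eqF.
  move=> H.
  have -> : v n ^+ 2 = (v n / n%:R) * (v n * n%:R) by field; rewrite gt_eqF.
  have := ler_wpM2l (divr_ge0 (vge0 n) (ltW np)) H; lra.
have Vpos : forall n, (1 <= n)%N -> 0 < V n.
  move=> n n1; rewrite /V big_nat_recr //=.
  by apply: ltr_wpDl; [apply: sumr_ge0 => k _ | exact: vpos].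
set nN : R := N%:R.
have nNp : 0 < nN by rewrite ltr0n.
set P := nN `^ (p - 1).
have Pp : 0 < P by rewrite powR_gt0.
have NpE : nN `^ p = P * nN by rewrite /P powB1 // divfK // gt_eqF.
set E := expR (p / nN).
have Ep : 0 < E by exact: expR_gt0.
have E1 : (N.+1%:R : R) `^ p <= P * nN * E by rewrite -NpE powS_exp // ltW.
have E2 : (N.+1%:R : R) `^ (p - 1) <= P * E.
  apply: (le_trans (@powS_exp R (p - 1) N (ltW pm1) N1)); rewrite -/nN -/P.
  apply: ler_wpM2l; first exact: ltW.
  by rewrite /E ler_expR ler_pM2r ?invr_gt0 // gerBl.
have VNb : V N <= P * nN * E / p.
  rewrite ler_pdivlMr // mulrC VE; apply: le_trans E1; exact: sumD.
have Sb : \sum_(1 <= n < N.+1) v n / n%:R <= P * E / (p - 1).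
  rewrite ler_pdivlMr // mulrC; apply: le_trans E2.
  rewrite (@eq_big_nat _ _ _ 1 N.+1 _ (fun k => (k%:R : R) `^ (p - 1 - 1))); last first.
    by move=> k /andP [k1 _]; rewrite vE [RHS]powB1 ?ltr0n.
  exact: sumD.
have WNb : P * nN * nN / (p + 1) <= wsum p N.
  have p1p : 0 < p + 1 by rewrite ltr_wpDl // ltW.
  rewrite ler_pdivrMr //.
  have := @sumA R (p + 1) N (ler_wpDl (ltW p0) (lexx 1)).
  rewrite -WE.
  have -> : nN `^ (p + 1) = P * nN * nN.
    by rewrite -NpE -[in RHS](addrK 1 p) powB1 ?divfK ?gt_eqF.
  lra.
have hm0 : forall n m, (1 <= n)%N -> Fset m -> 0 <= h (pi n) m.
  by move=> n m n1 Fm; apply: le_trans (hdn n m n1 Fm); exact: sqr_ge0.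
have VNp := Vpos N N1.
have p1p : 0 < p + 1 by rewrite ltr_wpDl // ltW.
have main : forall e, 0 < e -> wregret_at p F pi N x / wsum p N <=
   (p + 1) ^+ 2 * E / (2 * mu_f) *
      (p * G_h ^+ 2 / (2 * (p - 1) * mu_h) * (1 / nN ^+ 2) + (eps + e) / (p * nN)).
  move=> e e0.
  have tpos : forall n, (1 <= n <= N)%N -> 0 < v n / V N.
    by move=> n /andP [n1 _]; rewrite divr_gt0 ?vpos.
  have tsum : \sum_(1 <= n < N.+1) v n / V N = 1.
    by rewrite -mulr_suml mulfV // gt_eqF.
  have tpi : forall n, (1 <= n <= N)%N -> Pi (pi n).
    by move=> n /andP [n1 _]; exact: Ppi.
  have [m [Fm Hm]] := heps N (fun n => v n / V N) pi tpos tsum tpi e e0.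
  have HmV : \sum_(1 <= n < N.+1) v n * h (pi n) m <= V N * (eps + e).
    rewrite mulrC -ler_pdivrMr //.
    apply: le_trans Hm; rewrite mulr_suml; apply: ler_sum_nat => k _ /=.
    by rewrite mulrAC.
  have Ae : 0 <= eps + e.
    have : 0 <= \sum_(1 <= n < N.+1) v n * h (pi n) m.
      rewrite big_nat; apply: sumr_ge0 => i /andP [i1 _].
      by rewrite mulr_ge0 // hm0.
    move=> /le_trans /(_ HmV); rewrite pmulr_rge0 //.
  have R2 := @tele R M (fun k y => v k * h (pi k) y) Fset Fh _ N m FFh Fm PS2.
  rewrite /= sumrB in R2.
  have C2 : \sum_(1 <= n < N.+1) v n ^+ 2 * G_h ^+ 2 / (2 * (mu_h * V n))
      <= G_h ^+ 2 / (2 * mu_h) * p * \sum_(1 <= n < N.+1) v n / n%:R.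
    rewrite mulr_sumr; apply: ler_sum_nat => n /andP [n1 _].
    have Vn := Vpos n n1.
    have K0 : 0 <= G_h ^+ 2 / (2 * (mu_h * V n)).
      by rewrite divr_ge0 ?sqr_ge0 // mulr_ge0 // mulr_ge0 // ltW.
    have := ler_wpM2r K0 (key2 n n1).
    have -> : p * (v n / n%:R) * V n * (G_h ^+ 2 / (2 * (mu_h * V n))) =
              G_h ^+ 2 / (2 * mu_h) * p * (v n / n%:R).
      by field; rewrite !gt_eqF ?ltr0n.
    by move=> H; apply: le_trans H; rewrite -!mulrA.
  have C1 : \sum_(1 <= n < N.+1) w n ^+ 2 * h (pi n) (Fh n) / (2 * (mu_f * wsum p n))
      <= (p + 1) / (2 * mu_f) * \sum_(1 <= n < N.+1) v n * h (pi n) (Fh n).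
    rewrite mulr_sumr; apply: ler_sum_nat => n /andP [n1 _].
    have Wn := Wpos n n1.
    have K0 : 0 <= h (pi n) (Fh n) / (2 * (mu_f * wsum p n)).
      by rewrite divr_ge0 ?hnn // mulr_ge0 // mulr_ge0 // ltW.
    have := ler_wpM2r K0 (key1 n n1).
    have -> : (p + 1) * v n * wsum p n * (h (pi n) (Fh n) / (2 * (mu_f * wsum p n))) =
              (p + 1) / (2 * mu_f) * (v n * h (pi n) (Fh n)).
      by field; rewrite !gt_eqF.
    by move=> H; apply: le_trans H; rewrite -!mulrA.
  move: R2 C2 C1 HmV.
  set Hs := \sum_(1 <= i < N.+1) v i * h (pi i) (Fh i).
  set Am := \sum_(1 <= i < N.+1) v i * h (pi i) m.
  set Sv := \sum_(1 <= n < N.+1) v n / n%:R.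
  set S2 := \sum_(1 <= n < N.+1) v n ^+ 2 * G_h ^+ 2 / (2 * (mu_h * V n)).
  set S1 := \sum_(1 <= n < N.+1) w n ^+ 2 * h (pi n) (Fh n) / (2 * (mu_f * wsum p n)).
  move=> R2 C2 C1 HmV.
  have K1 : 0 <= G_h ^+ 2 / (2 * mu_h) * p.
    by rewrite mulr_ge0 ?divr_ge0 ?sqr_ge0 ?mulr_ge0 ?ltW.
  have a1 := ler_wpM2r Ae VNb.
  have a2 := ler_wpM2l K1 Sb.
  set B := P * nN * E / p * (eps + e) + G_h ^+ 2 / (2 * mu_h) * p * (P * E / (p - 1)).
  have HsB : Hs <= B.
    rewrite /B; rewrite -/Sv in a2; lra.
  have K2 : 0 <= (p + 1) / (2 * mu_f) by rewrite divr_ge0 ?mulr_ge0 ?ltW.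
  have a3 := ler_wpM2l K2 HsB.
  have Rg : wregret_at p F pi N x <= (p + 1) / (2 * mu_f) * B by move: R1; rewrite -/S1 => R1; lra.
  have B0 : 0 <= B.
    rewrite /B; apply: addr_ge0; apply: mulr_ge0 => //.
      by rewrite divr_ge0 ?mulr_ge0 ?ltW.
    by rewrite divr_ge0 ?mulr_ge0 ?ltW.
  have X0 : 0 <= (p + 1) / (2 * mu_f) * B by rewrite mulr_ge0.
  have WN := Wpos N N1.
  have W'p : 0 < P * nN * nN / (p + 1) by rewrite divr_gt0 ?mulr_gt0.
  apply: (le_trans (y := (p + 1) / (2 * mu_f) * B / wsum p N)).
    by rewrite ler_pM2r ?invr_gt0.
  apply: (le_trans (y := (p + 1) / (2 * mu_f) * B / (P * nN * nN / (p + 1)))).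
    by rewrite ler_wpM2l // lef_pV2 ?posrE.
  rewrite /B.
  rewrite le_eqVlt; apply/orP; left; apply/eqP. field.
  by rewrite !gt_eqF.
apply/ler_addgt0Pr => e' e'0.
have Cp : 0 < (p + 1) ^+ 2 * E / (2 * mu_f) / (p * nN).
  by rewrite !divr_gt0 ?mulr_gt0 ?exprn_gt0.
have := main (e' / ((p + 1) ^+ 2 * E / (2 * mu_f) / (p * nN))) (divr_gt0 e'0 Cp).
set C := (p + 1) ^+ 2 * E / (2 * mu_f) / (p * nN).
move=> H; apply: (le_trans H).
rewrite le_eqVlt; apply/orP; left; apply/eqP.
rewrite /C; field.
by rewrite !gt_eqF.
Qed.
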